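(* Let $G=(V,E)$ be a finite simple graph and let $x$ be a maximum cost construction sequence for $G$ (i.e. $\nu(x)=\nu^*(G)$). If $(v_1,\dots,v_n)$ is the order in which the vertices of $G$ appear in $x$, then $\deg(v_i)\ge\deg(v_{i+1})$ for all $1\le i<n$.
   Context: For a finite simple graph $G=(V,E)$ with $\ell=|V|+|E|$, a construction sequence (c-sequence) is a bijection $x:\{1,\dots,\ell\}\to V\sqcup E$ such that every edge $e=uw$ satisfies $x^{-1}(e)>\max\{x^{-1}(u),x^{-1}(w)\}$. The cost of $x$ is $\nu(x)=\sum_{e=uw\in E}\big(2x^{-1}(e)-x^{-1}(u)-x^{-1}(w)\big)$, and $\nu^*(G)$ is the maximum of $\nu(x)$ over all c-sequences for $G$. *)

(* Defs.v *)
From mathcomp Require Import all_boot.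
Set Implicit Arguments. Unset Strict Implicit. Unset Printing Implicit Defensive.

(* A finite simple graph: vertex type T (a finType), adjacency e : rel T,
   assumed symmetric and irreflexive (hypotheses of the theorem). *)
Section CSeq.
Variables (T : finType) (e : rel T).

Definition is_edge (A : {set T}) : bool :=
  [exists u, exists w, e u w && (A == [set u; w])].

Definition Edge := {A : {set T} | is_edge A}.

Definition Elt := (T + Edge)%type.

Definition ell := #|{: Elt}|.

Definition deg (v : T) : nat := #|[set w | e v w]|.

(* x^{-1}(z), positions numbered 1..l (0 if z is not hit, which cannot
   happen for a bijection) *)
Definition pos (x : {ffun 'I_ell -> Elt}) (z : Elt) : nat :=
  match [pick i | x i == z] with Some i => i.+1 | None => 0 end.

(* x is a construction sequence: a bijection {1..l} -> V ⊔ E (injective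
   between sets of equal cardinality) such that every edge comes after
   both of its endpoints. *)
Definition is_cseq (x : {ffun 'I_ell -> Elt}) : bool :=
  injectiveb x &&
  [forall A : Edge, forall u in val A, pos x (inl u) < pos x (inr A)].

Definition cost (x : {ffun 'I_ell -> Elt}) : nat :=
  \sum_(A : Edge) (2 * pos x (inr A) - \sum_(u in val A) pos x (inl u)).

Definition nu_star : nat := \max_(y : {ffun 'I_ell -> Elt} | is_cseq y) cost y.

Definition vertex_order (x : {ffun 'I_ell -> Elt}) : seq T :=
  pmap (fun i : 'I_ell => if x i is inl v then Some v else None) (enum 'I_ell).

End CSeq.

(* Main.v *)
Require Import Defs.
From mathcomp Require Import all_boot zify.
Set Implicit Arguments. Unset Strict Implicit. Unset Printing Implicit Defensive.

Lemma pmap_first (A B : Type) (f : A -> option B) (a0 : A) (b0 : B) (s : seq A) :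
  0 < size (pmap f s) ->
  exists q, [/\ q < size s, f (nth a0 s q) = Some (nth b0 (pmap f s) 0)
            & forall j, j < q -> f (nth a0 s j) = None].
Proof.
elim: s => [//|y s IH] /=.
case Hy: (f y) => [b|] /= Hs.
  by exists 0; split.
have [q [H1 H2 H3]] := IH Hs.
exists q.+1; split => //; case => [|j] //= Hj; exact: H3.
Qed.

Lemma pmap_split (A B : Type) (f : A -> option B) (a0 : A) (b0 : B) (s : seq A) i :
  i.+1 < size (pmap f s) ->
  exists p q, [/\ p < q, q < size s, f (nth a0 s p) = Some (nth b0 (pmap f s) i),
     f (nth a0 s q) = Some (nth b0 (pmap f s) i.+1)
   & forall j, p < j < q -> f (nth a0 s j) = None].
Proof.
elim: s i => [//|y s IH] i /=.
case Hy: (f y) => [b|] /= Hs.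
  case: i Hs => [|i] Hs.
    have [q [H1 H2 H3]] := @pmap_first _ _ f a0 b0 s Hs.
    exists 0, q.+1; split => //.
    by case => [|j] //=; apply: H3.
  have [p [q [H1 H2 H3 H4 H5]]] := IH i Hs.
  exists p.+1, q.+1; split => //.
  by case => [|j] //=; apply: H5.
have [p [q [H1 H2 H3 H4 H5]]] := IH i Hs.
exists p.+1, q.+1; split => //.
by case => [|j] //=; apply: H5.
Qed.

Section G.
Variables (T : finType) (e : rel T).
Hypotheses (e_sym : symmetric e) (e_irr : irreflexive e).

Lemma edgeP (A : Edge e) : exists u w, [/\ e u w, u != w & val A = [set u; w]].
Proof.
have /existsP [u /existsP [w /andP [Huw /eqP HA]]] := valP A.
exists u, w; split => //; apply/eqP => Heq; subst; by rewrite e_irr in Huw.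
Qed.

Lemma sum2 (F : T -> nat) u w : u != w -> \sum_(v in [set u; w]) F v = F u + F w.
Proof. by move=> Huw; rewrite big_setU1 ?big_set1 // in_set1. Qed.

Definition other v (A : Edge e) := odflt v [pick w in val A | w != v].

Lemma otherP v (A : Edge e) : v \in val A ->
  [/\ val A = [set v; other v A], other v A != v & e v (other v A)].
Proof.
move=> Hv; have [u [w [Huw Hne HA]]] := edgeP A.
rewrite /other; case: pickP => [w' /andP [Hw' Hne']|H] /=.
  move: Hv Hw' Hne'; rewrite HA !inE => /orP [] /eqP -> /orP [] /eqP ->;
   rewrite ?eqxx // => _; split => //; try by rewrite setUC.
  by rewrite e_sym.
exfalso; move: Hv; rewrite HA !inE => /orP [] /eqP Ev.
  by move: (H w); rewrite HA !inE eqxx orbT Ev eq_sym Hne.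
by move: (H u); rewrite HA !inE eqxx Ev Hne.
Qed.

Lemma deg_sum v : \sum_(A : Edge e) (v \in val A) = deg e v.
Proof.
have -> : \sum_(A : Edge e) (v \in val A) = #|[set A : Edge e | v \in val A]|.
  rewrite -sum1_card [RHS]big_mkcond /=; apply: eq_bigr => A _.
  by rewrite inE; case: (v \in val A).
rewrite /deg; have -> : [set w | e v w] = other v @: [set A : Edge e | v \in val A].
  apply/setP => w; rewrite inE; apply/idP/imsetP.
    move=> Hvw.
    have He : is_edge e [set v; w].
      by apply/existsP; exists v; apply/existsP; exists w; rewrite Hvw eqxx.
    pose A0 : Edge e := exist (fun B => is_edge e B) _ He.
    have HvA : v \in val A0 by rewrite /= !inE eqxx.
    exists A0; first by rewrite inE.
    have [H1 H2 H3] := otherP HvA.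
    have : other v A0 \in val A0 by rewrite H1 !inE eqxx orbT.
    by rewrite /= !inE (negbTE H2) /= => /eqP.
  move=> [A]; rewrite inE => HA ->.
  by have [] := otherP HA.
rewrite card_in_imset // => A1 A2; rewrite !inE => H1 H2 Ho.
apply: val_inj; have [-> _ _] := otherP H1; have [-> _ _] := otherP H2.
by rewrite Ho.
Qed.
End G.

Definition Nf p q m := if m == q.+1 then p.+1 else if p < m <= q then m.+1 else m.

Lemma arith1 p q Pu Pw PA : p < q -> Pu < PA -> Pw < PA -> Pu != Pw ->
  PA != p.+1 -> PA != q.+1 -> ~~(p.+1 < Pu <= q) -> ~~(p.+1 < Pw <= q) ->
  2*PA - (Pu+Pw) + (q-p) * ((Pu == q.+1) || (Pw == q.+1)) <=
  2 * Nf p q PA - (Nf p q Pu + Nf p q Pw) + ((Pu == p.+1) || (Pw == p.+1)).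
Proof.
rewrite /Nf => *.
repeat (case: ifP => [?|?]); repeat (case: eqP => [?|?]); simpl; lia.
Qed.

Lemma arith2 p q Pu PA : p < q -> Pu < PA ->
  PA != p.+1 -> PA != q.+1 -> ~~(p.+1 < Pu <= q) -> Nf p q Pu < Nf p q PA.
Proof.
rewrite /Nf => *.
repeat (case: ifP => [?|?]); repeat (case: eqP => [?|?]); simpl; lia.
Qed.

Section Core.
Variables (T : finType) (e : rel T).
Hypotheses (e_sym : symmetric e) (e_irr : irreflexive e).
Local Notation n := (ell e).

Lemma posE (y : {ffun 'I_n -> Elt e}) : injective y ->
  forall k z, y k = z -> pos y z = k.+1.
Proof.
move=> inj k z yk; rewrite /pos; case: pickP => [i /eqP|/(_ k)].
  by rewrite -yk => /inj ->.
by rewrite yk eqxx.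
Qed.

Variables (x : {ffun 'I_n -> Elt e}) (hx : is_cseq x) (P Q : 'I_n) (a b : T).
Hypotheses (hPQ : P < Q) (hxP : x P = inl a) (hxQ : x Q = inl b)
  (hmid : forall j : 'I_n, P < j < Q -> exists A, x j = inr A).

Lemma xinj : injective x.
Proof. by case/andP: hx => /injectiveP. Qed.

Lemma xsurj z : exists k, x k = z.
Proof.
have /codomP [k Hk] : z \in codom x.
  by apply: (inj_card_onto xinj); rewrite card_ord /ell.
by exists k.
Qed.

Lemma pos_inj z1 z2 : pos x z1 = pos x z2 -> z1 = z2.
Proof.
have [k1 H1] := xsurj z1; have [k2 H2] := xsurj z2.
rewrite (posE xinj H1) (posE xinj H2) => [[]] E.
by rewrite -H1 -H2; congr (x _); apply: val_inj.
Qed.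

Local Notation p := (nat_of_ord P).
Local Notation q := (nat_of_ord Q).

Definition sigma (j : 'I_n) : 'I_n :=
  if (j : nat) == p then Q else if p < j <= q then insubd j (j.-1) else j.
Definition tau (k : 'I_n) : 'I_n :=
  if (k : nat) == q then P else if p <= k < q then insubd k (k.+1) else k.

Lemma val_sigma j : sigma j = (if (j : nat) == p then q else if p < j <= q then j.-1 else j) :> nat.
Proof.
rewrite /sigma; case: ifP => // _; case: ifP => // H; rewrite val_insubd.
have := ltn_ord j; case: ifP => //; lia.
Qed.

Lemma val_tau k : tau k = (if (k : nat) == q then p else if p <= k < q then k.+1 else k) :> nat.
Proof.
rewrite /tau; case: ifP => // _; case: ifP => // H; rewrite val_insubd.
have := ltn_ord Q; case: ifP => //; lia.
Qed.

Lemma sigmaK : cancel sigma tau.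
Proof.
move=> j; apply: val_inj => /=; rewrite val_tau.
have := ltn_ord j; have := ltn_ord Q; have := hPQ; move: (val_sigma j).
move: (nat_of_ord (sigma j)) => s.
repeat (case: ifP => [?|?]); simpl; move=> *; lia.
Qed.

Lemma tauK : cancel tau sigma.
Proof.
move=> j; apply: val_inj => /=; rewrite val_sigma.
have := ltn_ord j; have := ltn_ord Q; have := hPQ; move: (val_tau j).
move: (nat_of_ord (tau j)) => s.
repeat (case: ifP => [?|?]); simpl; move=> *; lia.
Qed.

Definition y : {ffun 'I_n -> Elt e} := [ffun j => x (sigma j)].

Lemma yinj : injective y.
Proof. by move=> j1 j2; rewrite !ffunE => /xinj /(can_inj sigmaK). Qed.

Lemma posy z : pos y z = Nf p q (pos x z).
Proof.
have [k Hk] := xsurj z.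
rewrite (posE xinj Hk) (@posE y yinj (tau k)); last by rewrite ffunE tauK.
rewrite /Nf val_tau; have := ltn_ord k; have := ltn_ord Q; move: hPQ => *.
repeat (case: ifP => [?|?]); repeat (case: eqP => [?|?]); simpl; lia.
Qed.

Lemma vpos v : [/\ (pos x (inl v) == p.+1) = (v == a),
   (pos x (inl v) == q.+1) = (v == b) & ~~ (p.+1 < pos x (inl v) <= q)].
Proof.
have [k Hk] := xsurj (inl v); rewrite (posE xinj Hk) !eqSS; split.
- apply/eqP/eqP => [E|E].
    have Ek : k = P by apply: val_inj.
    by move: Hk; rewrite Ek hxP => [[]].
  by move: Hk; rewrite E -hxP => /xinj ->.
- apply/eqP/eqP => [E|E].
    have Ek : k = Q by apply: val_inj.
    by move: Hk; rewrite Ek hxQ => [[]].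
  by move: Hk; rewrite E -hxQ => /xinj ->.
- apply/negP => /andP [H1 H2].
  have [A HA] : exists A, x k = inr A by apply: hmid; rewrite ltnS in H1; rewrite H1.
  by rewrite HA in Hk.
Qed.

Lemma epos A : (pos x (inr A) != p.+1) && (pos x (inr A) != q.+1).
Proof.
have [k Hk] := xsurj (inr A); rewrite (posE xinj Hk) !eqSS.
apply/andP; split; apply/negP => /eqP E.
  have Ek : k = P by apply: val_inj.
  by move: Hk; rewrite Ek hxP.
have Ek : k = Q by apply: val_inj.
by move: Hk; rewrite Ek hxQ.
Qed.

Lemma xord (A : Edge e) u : u \in val A -> pos x (inl u) < pos x (inr A).
Proof.
case/andP: hx => _ /forallP H; move: (H A) => /forall_inP; apply.
Qed.

Lemma term (A : Edge e) :
  2 * pos x (inr A) - \sum_(u in val A) pos x (inl u) + (q - p) * (b \in val A)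
  <= 2 * pos y (inr A) - \sum_(u in val A) pos y (inl u) + (a \in val A).
Proof.
have [u [w [Huw Hne HA]]] := edgeP e_irr A.
have Hu : u \in val A by rewrite HA !inE eqxx.
have Hw : w \in val A by rewrite HA !inE eqxx orbT.
have Hpuw : pos x (inl u) != pos x (inl w).
  by apply/negP => /eqP /pos_inj [] /eqP; rewrite (negbTE Hne).
rewrite HA !sum2 // !posy !inE.
have [Eu1 Eu2 Eu3] := vpos u; have [Ew1 Ew2 Ew3] := vpos w.
have /andP [E1 E2] := epos A.
rewrite ![b == _]eq_sym ![a == _]eq_sym -Eu2 -Ew2 -Eu1 -Ew1.
by apply: arith1 => //; apply: xord.
Qed.

Lemma ycseq : is_cseq y.
Proof.
apply/andP; split; first by apply/injectiveP; exact: yinj.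
apply/forallP => A; apply/forall_inP => u Hu.
rewrite !posy; have [_ _ Eu3] := vpos u; have /andP [E1 E2] := epos A.
by apply: arith2 => //; apply: xord.
Qed.

Lemma cost_lt : deg e a < deg e b -> cost x < cost y.
Proof.
move=> Hd.
have H : cost x + (q - p) * deg e b <= cost y + deg e a.
  rewrite -!(deg_sum e_sym e_irr) /cost big_distrr -!big_split /=.
  by apply: leq_sum => A _; apply: term.
have : deg e b <= (q - p) * deg e b by rewrite leq_pmull // subn_gt0.
lia.
Qed.

End Core.

Theorem lemma3 (T : finType) (e : rel T)
  (e_sym : symmetric e) (e_irr : irreflexive e)
  (x : {ffun 'I_(ell e) -> Elt e})
  (hx : is_cseq x) (hmax : cost x = nu_star e) :
  let degs := [seq deg e v | v <- vertex_order x] in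
  forall i : nat, i.+1 < size degs ->
    nth 0 degs i.+1 <= nth 0 degs i.
Proof.
move=> degs i Hi; rewrite leqNgt; apply/negP => Hlt.
have Hsz : i.+1 < size (vertex_order x) by move: Hi; rewrite size_map.
have v0 : T by move: Hsz; case: (vertex_order x) => // v0 _ _; exact v0.
have n0 : 0 < ell e.
  suff : size (vertex_order x) <= ell e by lia.
  by rewrite /vertex_order size_pmap; apply: leq_trans (count_size _ _) _; rewrite size_enum_ord.
pose a0 : 'I_(ell e) := Ordinal n0.
move: Hlt; rewrite /degs !(nth_map v0) //; last exact: ltnW.
move: Hsz; rewrite /vertex_order => Hsz.
have [p [q [H1 H2 H3 H4 H5]]] := @pmap_split _ _ _ a0 v0 _ _ Hsz.
set vo := pmap _ _ in H3 H4 *.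
rewrite size_enum_ord in H2.
have Hp : p < ell e by apply: ltn_trans H2.
pose P : 'I_(ell e) := Ordinal Hp.
pose Q : 'I_(ell e) := Ordinal H2.
have nthE (j : 'I_(ell e)) : nth a0 (enum 'I_(ell e)) j = j.
  by apply: val_inj; rewrite /= nth_enum_ord.
move: H3 H4; rewrite -[p]/(val P) -[q]/(val Q) !nthE.
case EP: (x P) => [a|] // [] Ea; case EQ: (x Q) => [b|] // [] Eb.
rewrite -Ea -Eb => Hd.
have hPQ : P < Q by [].
have hmid : forall j : 'I_(ell e), P < j < Q -> exists A, x j = inr A.
  move=> j Hj; have := H5 j Hj; rewrite nthE.
  by case: (x j) => // A _; exists A.
have Hc := cost_lt e_sym e_irr hx hPQ EP EQ hmid Hd.
have Hy := ycseq hx hPQ EP EQ hmid.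
have Hle : cost (y x P Q) <= cost x.
  by rewrite hmax /nu_star; apply: (leq_bigmax_cond (F := fun z => cost z)).
by move: (leq_trans Hc Hle); rewrite ltnn.
Qed.
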